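(* In the Neutralization-Based Reclamation (NBR) scheme described in the context, the number of nodes that are retired but not yet reclaimed is bounded (in every execution, including executions in which threads are delayed or crash).
   Context: Setting: an asynchronous shared-memory system with a fixed number $p$ of threads operating on a linked concurrent data structure; each unlinked node is retired by exactly one thread. NBR works as follows. Each thread has a private limbo bag of retired nodes, a thread-local flag restartable, and a row of a shared array reservations; each data structure operation reserves at most $k$ nodes, where $k$ is strictly smaller than the limbo bag size threshold $h$. Operations consist of read phases (start from an entry point, read only; restartable set to true at the start after clearing reservations) and write phases (entered after writing reservations of all nodes to be accessed in the write phase and setting restartable to false; only reserved nodes are accessed). On a neutralizing signal a thread with restartable true discards its private references and restarts its read phase from a checkpoint; a thread with restartable false ignores the signal. A thread appends each node it retires to its limbo bag; whenever the limbo bag exceeds the threshold $h$, the thread signals all other threads, scans all reservations, and frees every node in its limbo bag that is not reserved. Signals are assumed to be handled by the recipient before it takes any further step once the sender finishes sending. *)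

(* Defs.v *)
(* An abstract operational model of NBR (Neutralization-Based
   Reclamation) with p threads, per-operation reservation bound k and limbo-bag
   threshold h.  Nodes are identified by natural numbers. *)
From mathcomp Require Import all_boot.
Set Implicit Arguments. Unset Strict Implicit. Unset Printing Implicit Defensive.

Record nbr_state (p : nat) := NbrState {
  bag         : 'I_p -> seq nat;
  res         : 'I_p -> seq nat;   (* row of the shared reservations array *)
  restartable : 'I_p -> bool;
  retired     : seq nat;           (* ghost: every node retired so far *)
  freed       : seq nat            (* ghost: every node freed so far *)
}.

Definition upd (p : nat) (T : Type) (f : 'I_p -> T) (t : 'I_p) (v : T) :
  'I_p -> T := fun u => if u == t then v else f u.

Definition init_state (p : nat) : nbr_state p :=
  NbrState (fun _ => [::]) (fun _ => [::]) (fun _ => true) [::] [::].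

Definition reserved (p : nat) (s : nbr_state p) (x : nat) : bool :=
  [exists u : 'I_p, x \in res s u].

(* Handling of a neutralizing signal by every thread: a thread with
   restartable = true discards its private references and restarts its read
   phase (its private references are not part of this abstract state, and it
   stays in its read phase); a thread with restartable = false ignores it. *)
Definition signal_all (p : nat) (s : nbr_state p) : nbr_state p := s.

(* Thread t retires node x: append to its limbo bag; if the bag exceeds h,
   signal all other threads (handled before they take further steps), scan all
   reservations and free every non-reserved node of the bag. *)
Definition retire_step (p h : nat) (s : nbr_state p) (t : 'I_p) (x : nat) :
    nbr_state p :=
  let b := rcons (bag s t) x in
  let s1 := NbrState (upd (bag s) t b) (res s) (restartable s)
                     (rcons (retired s) x) (freed s) in
  if size b <= h then s1 else
  let s2 := signal_all s1 in
  NbrState (upd (bag s2) t [seq y <- b | reserved s2 y]) (res s2)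
           (restartable s2) (retired s2)
           (freed s2 ++ [seq y <- b | ~~ reserved s2 y]).

(* One atomic step of some thread.  Delays and crashes are modelled by the
   arbitrary interleaving: a crashed thread simply takes no further steps. *)
Inductive nbr_step (p k h : nat) : nbr_state p -> nbr_state p -> Prop :=
  | StepBeginRead (s : nbr_state p) (t : 'I_p) :
      nbr_step k h s
        (NbrState (bag s) (upd (res s) t [::]) (upd (restartable s) t true)
                  (retired s) (freed s))
  | StepReserve (s : nbr_state p) (t : 'I_p) (r : seq nat) :
      restartable s t -> size r <= k ->
      nbr_step k h s
        (NbrState (bag s) (upd (res s) t r) (restartable s) (retired s) (freed s))
  | StepEnterWrite (s : nbr_state p) (t : 'I_p) :
      nbr_step k h s
        (NbrState (bag s) (res s) (upd (restartable s) t false)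
                  (retired s) (freed s))
  | StepRetire (s : nbr_state p) (t : 'I_p) (x : nat) :
      (* each unlinked node is retired by exactly one thread, exactly once *)
      x \notin retired s ->
      nbr_step k h s (retire_step h s t x).

Inductive nbr_reachable (p k h : nat) : nbr_state p -> Prop :=
  | ReachInit : nbr_reachable k h (init_state p)
  | ReachStep (s s' : nbr_state p) :
      nbr_reachable k h s -> nbr_step k h s s' -> nbr_reachable k h s'.

Definition unreclaimed (p : nat) (s : nbr_state p) : nat :=
  size [seq x <- retired s | x \notin freed s].

(* Main.v *)
Require Import Defs.
From mathcomp Require Import all_boot.

Lemma sumn_map_le (T : Type) (f : T -> nat) (c : nat) (l : seq T) :
  (forall x, f x <= c) -> sumn (map f l) <= size l * c.
Proof.
move=> H; elim: l => [|a l IH] //=.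
by rewrite mulSn leq_add.
Qed.

Lemma size_flat_le (p : nat) (g : 'I_p -> seq nat) (c : nat) :
  (forall t, size (g t) <= c) ->
  size (flatten [seq g u | u <- enum 'I_p]) <= p * c.
Proof.
move=> H; rewrite size_flatten /shape -map_comp.
have := @sumn_map_le _ (size \o g) c (enum 'I_p) H.
by rewrite size_enum_ord.
Qed.

Lemma in_flat (p : nat) (g : 'I_p -> seq nat) x t :
  x \in g t -> x \in flatten [seq g u | u <- enum 'I_p].
Proof.
move=> Hx; apply/flatten_mapP; exists t => //; by rewrite mem_enum.
Qed.

Arguments size_flat_le {p g c}.
Arguments in_flat {p g x t}.

Definition Inv {p : nat} (k h : nat) (s : nbr_state p) : Prop :=
 uniq (retired s) /\
     (forall t x, x \in bag s t -> x \in retired s) /\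
     (forall t, uniq (bag s t)) /\
     (forall t, size (res s t) <= k) /\
     (forall t, size (bag s t) <= h + p * k) /\
   (forall x, x \in retired s -> x \notin freed s -> exists t, x \in bag s t).

Lemma upd_eq (p : nat) (T : Type) (f : 'I_p -> T) t v u :
  upd f t v u = if u == t then v else f u.
Proof. by []. Qed.

Lemma inv_init p k h : Inv k h (init_state p).
Proof. by split => //= *. Qed.

Lemma inv_step p k h (s s' : nbr_state p) :
  nbr_step k h s s' -> Inv k h s -> Inv k h s'.
Proof.
case=> {s s'}.
- move=> s t [U1 [I2 [U3 [S4 [S5 I6]]]]]; (do ! split)=> //= u; rewrite /upd; by case: (u == t).
- move=> s t r _ Hr [U1 [I2 [U3 [S4 [S5 I6]]]]]; (do ! split)=> //= u; rewrite /upd; by case: (u == t).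
- move=> s t [U1 [I2 [U3 [S4 [S5 I6]]]]]; by do ! split.
move=> s t x Hx [U1 [I2 [U3 [S4 [S5 I6]]]]].
rewrite /retire_step /signal_all.
set b := rcons (bag s t) x.
have Ub : uniq b.
  rewrite /b rcons_uniq U3 andbT; apply/negP => /I2; by rewrite (negbTE Hx).
have Ur : uniq (rcons (retired s) x) by rewrite rcons_uniq Hx U1.
have Bin : forall y, y \in b -> y \in rcons (retired s) x.
  move=> y; rewrite /b !mem_rcons !in_cons => /orP [->//|/I2 ->]; by rewrite orbT.
case: ifP => Hsz.
- (do ! split)=> //=.
  + move=> u y; rewrite /upd; case: (u == t); first exact: Bin.
    by move/I2; rewrite mem_rcons in_cons => ->; rewrite orbT.
  + by move=> u; rewrite /upd; case: (u == t).
  + move=> u; rewrite /upd; case: (u == t) => //.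
    by apply: (leq_trans Hsz); rewrite leq_addr.
  + move=> y; rewrite mem_rcons in_cons => /orP [/eqP ->|Hy] Hf.
      exists t; by rewrite /upd eqxx /b mem_rcons mem_head.
    have [u Hu] := I6 y Hy Hf.
    exists u; rewrite /upd; have [Eut|//] := eqVneq u t; rewrite Eut in Hu.
    by rewrite /b mem_rcons in_cons Hu orbT.
- (do ! split)=> //=.
  + move=> u y; rewrite /upd; case: (u == t).
      by rewrite mem_filter => /andP [_ /Bin].
    by move/I2; rewrite mem_rcons in_cons => ->; rewrite orbT.
  + move=> u; rewrite /upd; case: (u == t) => //; exact: filter_uniq.
  + move=> u; rewrite /upd; case: (u == t) => //.
    apply: leq_trans _ (leq_addl h _).
    apply: leq_trans _ (size_flat_le S4).
    apply: uniq_leq_size; first exact: filter_uniq.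
    move=> y; rewrite mem_filter => /andP [/existsP [v Hv] _]; exact: in_flat Hv.
  + move=> y Hy; rewrite mem_cat negb_or => /andP [Hf Hf2].
    case Hyb : (y \in b).
      exists t; rewrite /upd eqxx mem_filter Hyb andbT.
      by move: Hf2; rewrite mem_filter Hyb andbT negbK.
    move: Hy; rewrite mem_rcons in_cons => /orP [/eqP Hyx|Hy].
      by move: Hyb; rewrite Hyx /b mem_rcons mem_head.
    have [u Hu] := I6 y Hy Hf.
    exists u; rewrite /upd; have [Hut|//] := eqVneq u t.
    by move: Hyb; rewrite /b mem_rcons in_cons -Hut Hu orbT.
Qed.

Theorem lemma7 (p k h : nat) (hkh : k < h) :
  exists B : nat, forall s : nbr_state p,
    nbr_reachable k h s -> unreclaimed s <= B.
Proof.
exists (p * (h + p * k)) => s Hs.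
have [U1 [I2 [U3 [S4 [S5 I6]]]]] : Inv k h s.
  elim: Hs => [|s0 s1 _ IH Hst]; [exact: inv_init | exact: inv_step Hst IH].
rewrite /unreclaimed.
apply: leq_trans _ (size_flat_le S5).
apply: uniq_leq_size; first exact: filter_uniq.
move=> y; rewrite mem_filter => /andP [Hf Hy].
have [u Hu] := I6 y Hy Hf; exact: in_flat Hu.
Qed.
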